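(* For $p\in\mathbb{R}$ let $H_p:[0,\infty)^2\to[0,\infty)$ be $$H_p(r,t)=\frac{2}{p}\Big[\mathfrak{M}_1(r,t)-\mathfrak{M}_{1-p}(r,t)\Big]\ (p\neq 0),\qquad H_0(r,t)=r\ln r+t\ln t-(r+t)\ln\Big(\frac{r+t}{2}\Big)$$ (with $0\ln 0=0$). Then for every $p\in(-\infty,\tfrac12]\cup[1,+\infty)$ the function $\sqrt{H_p}$ is a metric on $[0,+\infty)$. For every $p\in(\tfrac12,1)$, $\sqrt{H_p}$ does not satisfy the triangle inequality on $[0,+\infty)$.
   Context: Power means: for $r,t\ge 0$ and $q\neq 0$, $\mathfrak{M}_q(r,t)=\big(\frac{r^q+t^q}{2}\big)^{1/q}$, except that $\mathfrak{M}_q(r,t)=0$ when $q<0$ and $r=0$ or $t=0$; $\mathfrak{M}_0(r,t)=\sqrt{rt}$. The function $H_p$ is the marginal perspective function $H_{U_p}$ induced by the power-like entropy $U_p(s)=\frac{1}{p(p-1)}(s^p-p(s-1)-1)$ ($p\neq0,1$), $U_1(s)=s\ln s-s+1$, $U_0(s)=s-1-\ln s$, i.e. the lower semicontinuous envelope of $(r,t)\mapsto\inf_{\theta>0}\big[tU_p(\theta/t)+rU_p(\theta/r)\big]$; the closed formula above is given. A function $D:[0,\infty)^2\to[0,\infty)$ is a metric on $[0,\infty)$ if $D(x,y)=0\iff x=y$, $D$ is symmetric, and $D(x,z)\le D(x,y)+D(y,z)$ for all $x,y,z$. *)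

(* Defs.v *)
From Stdlib Require Import Reals Lra.
Open Scope R_scope.

(* x^y for x >= 0, with the convention 0^y = 0 (used only for y > 0). *)
Definition rpow (x y : R) : R := if Req_EM_T x 0 then 0 else Rpower x y.

Definition xlnx (x : R) : R := if Req_EM_T x 0 then 0 else x * ln x.

Definition powmean (q r t : R) : R :=
  if Req_EM_T q 0 then sqrt (r * t)
  else if Rlt_dec q 0 then
    (if Req_EM_T r 0 then 0 else if Req_EM_T t 0 then 0
     else Rpower ((Rpower r q + Rpower t q) / 2) (/ q))
  else rpow ((rpow r q + rpow t q) / 2) (/ q).

Definition Hp (p r t : R) : R :=
  if Req_EM_T p 0 then xlnx r + xlnx t
       - (if Req_EM_T (r + t) 0 then 0 else (r + t) * ln ((r + t) / 2))
  else (2 / p) * (powmean 1 r t - powmean (1 - p) r t).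


Definition triangle_on_nonneg (D : R -> R -> R) : Prop :=
  forall x y z, 0 <= x -> 0 <= y -> 0 <= z -> D x z <= D x y + D y z.

Definition is_metric_on_nonneg (D : R -> R -> R) : Prop :=
  (forall x y, 0 <= x -> 0 <= y -> (D x y = 0 <-> x = y)) /\
  (forall x y, 0 <= x -> 0 <= y -> D x y = D y x) /\
  triangle_on_nonneg D.

(* Main.v *)
Require Import Defs.
From Stdlib Require Import Reals Lra Psatz.
From Coquelicot Require Import Coquelicot.
Open Scope R_scope.

Definition Lf (lam t : R) := ln ((1 + exp (t*lam))/2).
Definition sig (lam t : R) := exp (t*lam) / (1 + exp (t*lam)).
Definition Df (lam k h : R) := Lf lam (k+h) - Lf lam (k-h).
Definition dDf (lam k h : R) := lam * (sig lam (k+h) + sig lam (k-h)).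

Lemma Df_derive lam k h : is_derive (Df lam k) h (dDf lam k h).
Proof.
  unfold Df, Lf, dDf, sig.
  assert (H1 : 0 < exp ((k+h)*lam)) by apply exp_pos.
  assert (H2 : 0 < exp ((k-h)*lam)) by apply exp_pos.
  auto_derive; replace (k + - h) with (k - h) by ring.
  - repeat split; lra.
  - field; lra.
Qed.

Lemma alg_core A B1 B2 : 1 <= A -> 1 <= B1 -> B1 <= B2 ->
  1/(1+A*B1) + B1/(A+B1) <= 1/(1+A*B2) + B2/(A+B2).
Proof.
  intros HA HB1 HB12.
  assert (P1: 0 < 1 + A*B1) by nra. assert (P2: 0 < 1 + A*B2) by nra.
  assert (P3: 0 < A + B1) by nra. assert (P4: 0 < A + B2) by nra.
  assert (E : 1/(1+A*B2) + B2/(A+B2) - (1/(1+A*B1) + B1/(A+B1)) =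
     A*(B2-B1)*((1+A*B1)*(1+A*B2) - (A+B1)*(A+B2)) /
     ((1+A*B1)*(1+A*B2)*(A+B1)*(A+B2))) by (field; lra).
  assert (0 <= A*(B2-B1)*((1+A*B1)*(1+A*B2) - (A+B1)*(A+B2)) /
     ((1+A*B1)*(1+A*B2)*(A+B1)*(A+B2))).
  { apply Rdiv_le_0_compat.
    - apply Rmult_le_pos; [nra|].
      assert (0 <= (A-1)*(B1-1)) by nra. assert (0 <= (A-1)*(B2-1)) by nra.
      assert (1+A*B1 >= A+B1) by nra. assert (1+A*B2 >= A+B2) by nra.
      nra.
    - repeat apply Rmult_lt_0_compat; lra. }
  lra.
Qed.

Lemma alg_core_strict A B1 B2 : 1 < A -> 1 <= B1 -> B1 < B2 ->
  1/(1+A*B1) + B1/(A+B1) < 1/(1+A*B2) + B2/(A+B2).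
Proof.
  intros HA HB1 HB12.
  assert (P1: 0 < 1 + A*B1) by nra. assert (P2: 0 < 1 + A*B2) by nra.
  assert (P3: 0 < A + B1) by nra. assert (P4: 0 < A + B2) by nra.
  assert (E : 1/(1+A*B2) + B2/(A+B2) - (1/(1+A*B1) + B1/(A+B1)) =
     A*(B2-B1)*((1+A*B1)*(1+A*B2) - (A+B1)*(A+B2)) /
     ((1+A*B1)*(1+A*B2)*(A+B1)*(A+B2))) by (field; lra).
  assert (0 < A*(B2-B1)*((1+A*B1)*(1+A*B2) - (A+B1)*(A+B2)) /
     ((1+A*B1)*(1+A*B2)*(A+B1)*(A+B2))).
  { apply Rdiv_lt_0_compat.
    - apply Rmult_lt_0_compat; [nra|].
      assert (0 <= (A-1)*(B1-1)) by nra. assert (0 < (A-1)*(B2-1)) by nra.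
      assert (1+A*B1 >= A+B1) by nra. assert (1+A*B2 > A+B2) by nra.
      nra.
    - repeat apply Rmult_lt_0_compat; lra. }
  lra.
Qed.

Lemma sig_sum lam k h : sig lam (k+h) + sig lam (k-h) =
  1/(1 + exp (-(k*lam)) * exp (-(h*lam))) + exp (-(h*lam))/(exp (-(k*lam)) + exp (-(h*lam))).
Proof.
  unfold sig.
  assert (E1: exp ((k+h)*lam) * (exp (-(k*lam)) * exp (-(h*lam))) = 1).
  { rewrite <- !exp_plus. replace ((k + h) * lam + (- (k * lam) + - (h * lam))) with 0 by ring. apply exp_0. }
  assert (E2: exp ((k-h)*lam) * exp (-(k*lam)) = exp (-(h*lam))).
  { rewrite <- !exp_plus. f_equal. ring. }
  pose proof (exp_pos ((k+h)*lam)). pose proof (exp_pos ((k-h)*lam)).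
  pose proof (exp_pos (-(k*lam))). pose proof (exp_pos (-(h*lam))).
  set (a := exp ((k+h)*lam)) in *. set (b := exp ((k-h)*lam)) in *.
  set (A := exp (-(k*lam))) in *. set (B := exp (-(h*lam))) in *.
  assert (Ea : a = 1/(A*B)). { apply (Rmult_eq_reg_r (A*B)); [|nra]. rewrite E1. field. lra. }
  assert (Eb : b = B/A). { apply (Rmult_eq_reg_r A); [|lra]. rewrite E2. field. lra. }
  rewrite Ea, Eb. field. repeat split; nra.
Qed.

Lemma exp_ge1 x : 0 <= x -> 1 <= exp x.
Proof. intros H. destruct H. left. rewrite <- exp_0. apply exp_increasing; auto. subst; rewrite exp_0; lra. Qed.
Lemma exp_gt1 x : 0 < x -> 1 < exp x.
Proof. intros H. rewrite <- exp_0. apply exp_increasing; auto. Qed.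

Lemma dDf_mono lam k u v : lam < 0 -> 0 <= k -> 0 <= u -> u <= v -> dDf lam k v <= dDf lam k u.
Proof.
  intros Hl Hk Hu Huv. unfold dDf. rewrite !sig_sum.
  apply Rmult_le_compat_neg_l; [lra|].
  apply alg_core.
  - apply exp_ge1; nra.
  - apply exp_ge1; nra.
  - destruct (Req_dec u v). subst; lra. left; apply exp_increasing; nra.
Qed.

Lemma dDf_mono_strict lam k u v : lam < 0 -> 0 < k -> 0 <= u -> u < v -> dDf lam k v < dDf lam k u.
Proof.
  intros Hl Hk Hu Huv. unfold dDf. rewrite !sig_sum.
  apply Rmult_lt_gt_compat_neg_l; [lra|].
  apply alg_core_strict.
  - apply exp_gt1; nra.
  - apply exp_ge1; nra.
  - apply exp_increasing; nra.
Qed.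

Lemma Df0 lam k : Df lam k 0 = 0.
Proof. unfold Df. rewrite Rplus_0_r, Rminus_0_r. ring. Qed.

Lemma MVT_D lam k a b : a < b -> exists c, Df lam k b - Df lam k a = dDf lam k c * (b - a) /\ a < c < b.
Proof.
  intros Hab. apply MVT_cor2; auto. intros c _. apply is_derive_Reals. apply Df_derive.
Qed.

Lemma lemmaA lam k h1 h2 : lam < 0 -> 0 <= k -> 0 < h1 -> h1 <= h2 ->
  h1 * Df lam k h2 <= h2 * Df lam k h1.
Proof.
  intros Hl Hk H1 H12. destruct (Req_dec h1 h2) as [E|Hne]. subst; lra.
  destruct (MVT_D lam k 0 h1 ltac:(lra)) as [c1 [E1 R1]].
  destruct (MVT_D lam k h1 h2 ltac:(lra)) as [c2 [E2 R2]].
  rewrite Df0 in E1.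
  assert (dDf lam k c2 <= dDf lam k c1) by (apply dDf_mono; lra).
  assert (Df lam k h1 = dDf lam k c1 * h1) by lra.
  assert (Df lam k h2 = Df lam k h1 + dDf lam k c2 * (h2 - h1)) by lra.
  rewrite H2. rewrite H0. 
  assert (0 <= h1 * (h2 - h1) * (dDf lam k c1 - dDf lam k c2)) by (apply Rmult_le_pos; [apply Rmult_le_pos|]; lra).
  nra.
Qed.

Lemma lemmaA_strict lam k h1 h2 : lam < 0 -> 0 < k -> 0 < h1 -> h1 < h2 ->
  h1 * Df lam k h2 < h2 * Df lam k h1.
Proof.
  intros Hl Hk H1 H12.
  destruct (MVT_D lam k 0 h1 ltac:(lra)) as [c1 [E1 R1]].
  destruct (MVT_D lam k h1 h2 ltac:(lra)) as [c2 [E2 R2]].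
  rewrite Df0 in E1.
  assert (dDf lam k c2 < dDf lam k c1) by (apply dDf_mono_strict; lra).
  assert (Df lam k h1 = dDf lam k c1 * h1) by lra.
  assert (Df lam k h2 = Df lam k h1 + dDf lam k c2 * (h2 - h1)) by lra.
  rewrite H2. rewrite H0. 
  assert (0 < h1 * (h2 - h1) * (dDf lam k c1 - dDf lam k c2)) by (apply Rmult_lt_0_compat; [apply Rmult_lt_0_compat|]; lra).
  nra.
Qed.

Lemma lemmaA0 lam k h : lam < 0 -> 0 <= k -> 0 < h -> Df lam k h <= h * dDf lam k 0.
Proof.
  intros Hl Hk Hh.
  destruct (MVT_D lam k 0 h ltac:(lra)) as [c1 [E1 R1]].
  rewrite Df0 in E1.
  assert (dDf lam k c1 <= dDf lam k 0) by (apply dDf_mono; lra).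
  nra.
Qed.

Lemma exp_le_exp x y : x <= y -> exp x <= exp y.
Proof. intros [H|H]. left; apply exp_increasing; auto. subst; lra. Qed.
Lemma ln_le x y : 0 < x -> x <= y -> ln x <= ln y.
Proof. intros Hx [H|H]. left; apply ln_increasing; auto. subst; lra. Qed.
Lemma exp_le_inv x y : exp x <= exp y -> x <= y.
Proof. intros H. destruct (Rle_or_lt x y); auto. pose proof (exp_increasing y x H0). lra. Qed.

Lemma Lf0 lam : Lf lam 0 = 0.
Proof. unfold Lf. rewrite Rmult_0_l, exp_0. replace ((1+1)/2) with 1 by field. apply ln_1. Qed.

Lemma Lf_neg lam t : Lf lam (-t) = Lf lam t - t*lam.
Proof.
  unfold Lf. pose proof (exp_pos (t*lam)).
  replace ((1 + exp (- t * lam)) / 2) with (exp (-(t*lam)) * ((1 + exp (t*lam))/2)).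
  - rewrite ln_mult; [|apply exp_pos|lra]. rewrite ln_exp. ring.
  - replace (- t * lam) with (-(t*lam)) by ring. rewrite exp_Ropp. field. lra.
Qed.

Definition Tq lam q := Lf lam 1 - Lf lam (2*q-1) - ((1-q)/q) * Lf lam (2*q).

Lemma Tq_a lam q : lam < 0 -> 1/2 <= q < 1 -> 0 <= Tq lam q.
Proof.
  intros Hl Hq. pose proof (lemmaA lam q (1-q) q Hl ltac:(lra) ltac:(lra) ltac:(lra)) as H.
  unfold Df in H. replace (q+q) with (2*q) in H by ring. replace (q-q) with 0 in H by ring.
  replace (q + (1-q)) with 1 in H by ring. replace (q - (1-q)) with (2*q-1) in H by ring.
  rewrite Lf0 in H. unfold Tq.
  assert (((1-q)/q) * Lf lam (2*q) <= Lf lam 1 - Lf lam (2*q-1)).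
  { apply (Rmult_le_reg_l q); [lra|]. replace (q * ((1-q)/q * Lf lam (2*q))) with ((1-q)*Lf lam (2*q)) by (field; lra). lra. }
  lra.
Qed.

Lemma Tq_b lam q : lam < 0 -> 1 < q -> Tq lam q <= 0.
Proof.
  intros Hl Hq. pose proof (lemmaA lam q (q-1) q Hl ltac:(lra) ltac:(lra) ltac:(lra)) as H.
  unfold Df in H. replace (q+q) with (2*q) in H by ring. replace (q-q) with 0 in H by ring.
  replace (q + (q-1)) with (2*q-1) in H by ring. replace (q - (q-1)) with 1 in H by ring.
  rewrite Lf0 in H. unfold Tq.
  assert (Lf lam 1 - Lf lam (2*q-1) <= ((1-q)/q) * Lf lam (2*q)).
  { apply (Rmult_le_reg_l q); [lra|]. replace (q * ((1-q)/q * Lf lam (2*q))) with ((1-q)*Lf lam (2*q)) by (field; lra). lra. }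
  lra.
Qed.

Lemma Tq_c lam q : lam < 0 -> q < 0 -> 0 <= Tq lam q.
Proof.
  intros Hl Hq. pose proof (lemmaA lam (-q) (-q) (1-q) Hl ltac:(lra) ltac:(lra) ltac:(lra)) as H.
  unfold Df in H. replace (-q + -q) with (-(2*q)) in H by ring. replace (-q - -q) with 0 in H by ring.
  replace (-q + (1-q)) with (-(2*q-1)) in H by ring. replace (-q - (1-q)) with (-(1)) in H by ring.
  rewrite Lf0 in H. rewrite !Lf_neg in H. unfold Tq.
  set (a := Lf lam 1) in *. set (b := Lf lam (2*q-1)) in *. set (c := Lf lam (2*q)) in *. clearbody a b c.
  assert (q * (a - b) <= (1-q) * c) by (ring_simplify in H; ring_simplify; lra).
  assert (((1-q)/q) * c <= a - b).
  { apply (Rmult_le_reg_l (-q)); [lra|]. replace (-q * ((1-q)/q * c)) with (-((1-q)*c)) by (field; lra). nra. }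
  lra.
Qed.

Lemma Tq_d lam q : lam < 0 -> 0 < q < 1/2 -> Tq lam q < 0.
Proof.
  intros Hl Hq. pose proof (lemmaA_strict lam q q (1-q) Hl ltac:(lra) ltac:(lra) ltac:(lra)) as H.
  unfold Df in H. replace (q+q) with (2*q) in H by ring. replace (q-q) with 0 in H by ring.
  replace (q + (1-q)) with 1 in H by ring. replace (q - (1-q)) with (2*q-1) in H by ring.
  rewrite Lf0 in H. unfold Tq.
  assert (Lf lam 1 - Lf lam (2*q-1) < ((1-q)/q) * Lf lam (2*q)).
  { apply (Rmult_lt_reg_l q); [lra|]. replace (q * ((1-q)/q * Lf lam (2*q))) with ((1-q)*Lf lam (2*q)) by (field; lra). lra. }
  lra.
Qed.

Lemma T0 lam : lam < 0 -> (1 + exp lam) * Lf lam 2 <= 2 * lam * exp lam.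
Proof.
  intros Hl. pose proof (lemmaA0 lam 1 1 Hl ltac:(lra) ltac:(lra)) as H.
  unfold Df, dDf, sig in H. replace (1+1) with 2 in H by ring. replace (1-1) with 0 in H by ring.
  rewrite Lf0, Rplus_0_r, Rminus_0_r in H. replace (1-0) with 1 in H by ring. replace (1*lam) with lam in H by ring.
  pose proof (exp_pos lam).
  assert (E: 1 * (lam * (exp lam / (1 + exp lam) + exp lam / (1 + exp lam))) * (1 + exp lam) = 2*lam*exp lam) by (field; lra).
  apply (Rmult_le_compat_r (1+exp lam)) in H; [|lra]. match type of H with _ <= ?X => replace X with (2*lam*exp lam) in H by (field; lra) end. lra.
Qed.

Definition Pf q s := exp (q * ln (s*s)).
Definition M2f q s := exp (/ q * ln ((Pf q s + 1)/2)).
Definition Gc p s := 2/p * ((s*s+1)/2 - M2f (1-p) s).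
Definition dGc p s := 2/p * (s - M2f (1-p) s * Pf (1-p) s / ((Pf (1-p) s + 1)/2 * s)).

Lemma Gc_derive p s : p <> 0 -> 1 - p <> 0 -> 0 < s -> is_derive (Gc p) s (dGc p s).
Proof.
  intros Hp Hq Hs. unfold Gc, dGc, M2f, Pf.
  assert (0 < s*s) by nra.
  pose proof (exp_pos ((1-p) * ln (s*s))).
  auto_derive.
  - repeat split; lra.
  - unfold Rdiv. field. repeat split; try lra.
Qed.

Lemma ln_ss s : 0 < s -> ln (s*s) = 2 * ln s.
Proof. intros. rewrite ln_mult; lra. Qed.

Lemma Pf_eq q s : 0 < s -> Pf q s = exp ((2*q) * ln s).
Proof. intros. unfold Pf. rewrite ln_ss; auto. f_equal; ring. Qed.

Lemma expLf lam t : exp (Lf lam t) = (1 + exp (t*lam))/2.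
Proof. unfold Lf. rewrite exp_ln; auto. pose proof (exp_pos (t*lam)); lra. Qed.

Lemma M2f_eq q s : 0 < s -> M2f q s = exp (/q * Lf (ln s) (2*q)).
Proof. intros. unfold M2f, Lf. rewrite Pf_eq; auto. rewrite (Rplus_comm (exp _) 1). reflexivity. Qed.

Lemma Phi_eq p s : p <> 0 -> 1 - p <> 0 -> 0 < s ->
  dGc p s * (1-s) + 2 * Gc p s =
  2/p * (2 * (exp (Lf (ln s) 1) - exp (Lf (ln s) (2*(1-p)-1) + ((1-(1-p))/(1-p)) * Lf (ln s) (2*(1-p))))).
Proof.
  intros Hp Hq Hs. set (q := 1-p) in *. set (lam := ln s).
  assert (Es : exp lam = s) by (apply exp_ln; auto).
  assert (EX : Pf q s = exp ((2*q)*lam)) by (apply Pf_eq; auto).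
  assert (EM : M2f q s = exp (/q * Lf lam (2*q))) by (apply M2f_eq; auto).
  assert (HX: 0 < Pf q s) by (unfold Pf; apply exp_pos).
  assert (E1 : exp (Lf lam 1) = (1+s)/2) by (rewrite expLf, Rmult_1_l, Es; auto).
  assert (E2 : exp (Lf lam (2*q-1)) = (1 + Pf q s / s)/2).
  { rewrite expLf. replace ((2*q-1)*lam) with ((2*q)*lam + - lam) by ring. rewrite exp_plus, exp_Ropp, Es, <- EX. field. lra. }
  assert (E3 : exp (Lf lam (2*q)) = (Pf q s + 1)/2) by (rewrite expLf; rewrite <- EX; lra).
  replace (Lf lam (2*q-1) + ((1-q)/q) * Lf lam (2*q)) with (Lf lam (2*q-1) + /q * Lf lam (2*q) + - Lf lam (2*q)) by (field; auto).
  rewrite !exp_plus, exp_Ropp, E1, E2, E3, <- EM.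
  unfold dGc, Gc. fold q.
  replace (1-q) with p by (unfold q; ring).
  field. repeat split; lra.
Qed.

Lemma dG_eq p s : p <> 0 -> 1 - p <> 0 -> 0 < s ->
  dGc p s = 2/p * (s - s * exp (p * (/(1-p) * Lf (ln s) (2*(1-p)) - 2 * ln s))).
Proof.
  intros Hp Hq Hs. set (q := 1-p) in *. set (lam := ln s).
  assert (Es : exp lam = s) by (apply exp_ln; auto).
  assert (EX : Pf q s = exp ((2*q)*lam)) by (apply Pf_eq; auto).
  assert (EM : M2f q s = exp (/q * Lf lam (2*q))) by (apply M2f_eq; auto).
  assert (HX: 0 < Pf q s) by (unfold Pf; apply exp_pos).
  assert (E3 : exp (Lf lam (2*q)) = (Pf q s + 1)/2) by (rewrite expLf; rewrite <- EX; lra).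
  replace (p * (/ q * Lf lam (2 * q) - 2 * lam)) with (/q * Lf lam (2*q) + - Lf lam (2*q) + (2*q)*lam + - lam + - lam)
    by (unfold q; field; auto).
  rewrite !exp_plus, !exp_Ropp, E3, <- EM, <- EX, Es.
  unfold dGc. fold q. field. repeat split; lra.
Qed.

Lemma Y_nonneg q s : q <> 0 -> 0 < s < 1 -> 2 * ln s <= /q * Lf (ln s) (2*q).
Proof.
  intros Hq Hs. assert (Hl : ln s < 0) by (rewrite <- ln_1; apply ln_increasing; lra).
  unfold Lf. destruct (Rlt_or_le 0 q) as [Hq0|Hq0].
  - assert (0 < /q) by (apply Rinv_0_lt_compat; auto).
    apply (Rmult_le_reg_l q); auto.
    replace (q * (/ q * ln ((1 + exp (2 * q * ln s)) / 2))) with (ln ((1 + exp (2 * q * ln s)) / 2)) by (field; lra).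
    assert (X: exp (2*q*ln s) <= 1) by (rewrite <- exp_0; apply exp_le_exp; nra).
    pose proof (exp_pos (2*q*ln s)).
    replace (q * (2 * ln s)) with (ln (exp (2*q*ln s))) by (rewrite ln_exp; ring).
    apply ln_le; lra.
  - assert (q < 0) by lra.
    assert (/q < 0) by (apply Rinv_lt_0_compat; auto).
    apply (Rmult_le_reg_l (-q)); [lra|]. 
    replace (- q * (/ q * ln ((1 + exp (2 * q * ln s)) / 2))) with (- ln ((1 + exp (2 * q * ln s)) / 2)) by (field; lra).
    assert (X: 1 <= exp (2*q*ln s)) by (rewrite <- exp_0; apply exp_le_exp; nra).
    assert (ln ((1 + exp (2 * q * ln s)) / 2) <= ln (exp (2*q*ln s))) by (apply ln_le; lra).
    rewrite ln_exp in H1. nra.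
Qed.

Lemma dG_nonpos p s : p <> 0 -> 1 - p <> 0 -> 0 < s < 1 -> dGc p s <= 0.
Proof.
  intros Hp Hq Hs. rewrite dG_eq by (auto; lra).
  pose proof (Y_nonneg (1-p) s Hq Hs).
  set (Y := / (1 - p) * Lf (ln s) (2 * (1 - p)) - 2 * ln s).
  assert (0 <= Y) by (unfold Y; lra).
  destruct (Rlt_or_le 0 p) as [Hp0|Hp0].
  - assert (1 <= exp (p*Y)) by (rewrite <- exp_0; apply exp_le_exp; nra).
    assert (0 < 2/p) by (apply Rdiv_lt_0_compat; lra).
    assert (s - s * exp (p*Y) <= 0) by nra. nra.
  - assert (p < 0) by lra.
    assert (exp (p*Y) <= 1) by (rewrite <- exp_0; apply exp_le_exp; nra).
    assert (2/p < 0) by (unfold Rdiv; assert (/p < 0) by (apply Rinv_lt_0_compat; auto); nra).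
    assert (0 <= s - s * exp (p*Y)) by nra. nra.
Qed.

Lemma rpow_pos x y : 0 < x -> rpow x y = exp (y * ln x).
Proof. intros. unfold rpow. destruct (Req_EM_T x 0); [lra|reflexivity]. Qed.

Lemma powmean_pos q x y : q <> 0 -> 0 < x -> 0 < y ->
  powmean q x y = exp (/q * ln ((exp (q*ln x) + exp (q*ln y))/2)).
Proof.
  intros Hq Hx Hy. pose proof (exp_pos (q*ln x)). pose proof (exp_pos (q*ln y)).
  unfold powmean. destruct (Req_EM_T q 0); [lra|].
  destruct (Rlt_dec q 0).
  - destruct (Req_EM_T x 0); [lra|]. destruct (Req_EM_T y 0); [lra|]. reflexivity.
  - rewrite (rpow_pos x), (rpow_pos y), rpow_pos; auto. lra.
Qed.

Lemma powmean1 x y : 0 < x -> 0 < y -> powmean 1 x y = (x+y)/2.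
Proof.
  intros Hx Hy. rewrite powmean_pos; try lra.
  rewrite !Rmult_1_l, !exp_ln by lra. rewrite Rinv_1, Rmult_1_l. rewrite exp_ln; lra.
Qed.

Lemma exp_scale q y C : q <> 0 -> 0 < y -> 0 < C ->
  exp (/q * ln (exp (q*ln y) * C)) = y * exp (/q * ln C).
Proof.
  intros Hq Hy HC. rewrite ln_mult by (try apply exp_pos; lra). rewrite ln_exp.
  replace (/ q * (q * ln y + ln C)) with (ln y + /q * ln C) by (field; auto).
  rewrite exp_plus, exp_ln; auto.
Qed.

Lemma powmean_sym q x y : powmean q x y = powmean q y x.
Proof.
  unfold powmean. destruct (Req_EM_T q 0).
  - rewrite Rmult_comm; reflexivity.
  - destruct (Rlt_dec q 0).
    + destruct (Req_EM_T x 0); destruct (Req_EM_T y 0); try reflexivity.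
      rewrite Rplus_comm; reflexivity.
    + rewrite Rplus_comm; reflexivity.
Qed.

Lemma xlnx_pos x : 0 < x -> xlnx x = x * ln x.
Proof. intros. unfold xlnx. destruct (Req_EM_T x 0); [lra|reflexivity]. Qed.

Lemma Hp_sym p x y : Hp p x y = Hp p y x.
Proof.
  unfold Hp. destruct (Req_EM_T p 0).
  - rewrite (Rplus_comm y x). destruct (Req_EM_T (x+y) 0); ring.
  - rewrite (powmean_sym 1 x y), (powmean_sym (1-p) x y). reflexivity.
Qed.

Lemma powmean_hom q x y : 0 <= x -> 0 < y -> powmean q x y = y * powmean q (x/y) 1.
Proof.
  intros Hx Hy. destruct (Req_dec q 0) as [Hq|Hq].
  - subst. unfold powmean. destruct (Req_EM_T 0 0); [|lra].
    rewrite Rmult_1_r. replace (x*y) with ((y*y)*(x/y)) by (field; lra).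
    rewrite sqrt_mult by (try apply Rle_0_sqr; apply Rdiv_le_0_compat; lra).
    rewrite sqrt_square; lra.
  - destruct (Req_dec x 0) as [Hx0|Hx0].
    + subst. replace (0/y) with 0 by (field; lra). unfold powmean.
      destruct (Req_EM_T q 0); [lra|]. destruct (Rlt_dec q 0).
      * destruct (Req_EM_T 0 0); [ring|lra].
      * unfold rpow. destruct (Req_EM_T 0 0); [|lra]. destruct (Req_EM_T y 0); [lra|].
        destruct (Req_EM_T 1 0); [lra|]. unfold Rpower. rewrite ln_1, Rmult_0_r, exp_0.
        pose proof (exp_pos (q*ln y)).
        destruct (Req_EM_T ((0 + exp (q * ln y)) / 2) 0); [lra|].
        destruct (Req_EM_T ((0 + 1) / 2) 0); [lra|].
        replace ((0 + exp (q * ln y)) / 2) with (exp (q*ln y) * ((0+1)/2)) by field.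
        apply exp_scale; auto; lra.
    + assert (0 < x) by lra. assert (0 < x/y) by (apply Rdiv_lt_0_compat; lra).
      rewrite !powmean_pos; auto; try lra.
      rewrite ln_1, Rmult_0_r, exp_0.
      replace ((exp (q * ln x) + exp (q * ln y)) / 2) with (exp (q*ln y) * ((exp (q * ln (x/y)) + 1)/2)).
      * apply exp_scale; auto. pose proof (exp_pos (q * ln (x/y))). lra.
      * unfold Rdiv at 2. rewrite ln_mult, ln_Rinv by (try apply Rinv_0_lt_compat; lra).
        replace (q * (ln x + - ln y)) with (q*ln x + - (q*ln y)) by ring.
        rewrite exp_plus, exp_Ropp. pose proof (exp_pos (q*ln y)). field. lra.
Qed.

Lemma Hp_hom p x y : 0 <= x -> 0 < y -> Hp p x y = y * Hp p (x/y) 1.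
Proof.
  intros Hx Hy. unfold Hp. destruct (Req_EM_T p 0).
  - destruct (Req_EM_T (x+y) 0); [lra|]. destruct (Req_EM_T (x/y+1) 0).
    { assert (0 <= x/y) by (apply Rdiv_le_0_compat; lra). lra. }
    unfold xlnx. destruct (Req_EM_T y 0); [lra|]. destruct (Req_EM_T 1 0); [lra|].
    rewrite ln_1, Rmult_0_r.
    replace ((x/y+1)/2) with (((x+y)/2)/y) by (field; lra).
    rewrite (ln_div ((x+y)/2) y) by lra.
    destruct (Req_EM_T x 0).
    + subst. replace (0/y) with 0 by (field; lra). destruct (Req_EM_T 0 0); [|lra]. ring.
    + destruct (Req_EM_T (x/y) 0) as [Exy|Nxy]. { exfalso. assert (x = x/y*y) by (field; lra). rewrite Exy in H. lra. }
      rewrite (ln_div x y) by lra. field. lra.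
  - rewrite (powmean_hom 1 x y), (powmean_hom (1-p) x y) by auto. ring.
Qed.

Section Abs.
Variable H : R -> R -> R.
Hypothesis hsym : forall x y, H x y = H y x.
Hypothesis hhom : forall x y, 0 <= x -> 0 < y -> H x y = y * H (x/y) 1.
Hypothesis h00 : H 0 0 = 0.
Hypothesis h11 : H 1 1 = 0.
Hypothesis h01 : 0 < H 0 1.
Let psi s := H (s*s) 1 / ((1-s)*(1-s)).
Hypothesis hpsi : forall s1 s2, 0 <= s1 -> s1 <= s2 -> s2 < 1 -> psi s1 <= psi s2.
Hypothesis hg : forall t1 t2, 0 <= t1 -> t1 <= t2 -> t2 <= 1 -> H t2 1 <= H t1 1.

Lemma psi_pos s : 0 <= s < 1 -> 0 < psi s.
Proof.
  intros Hs. assert (psi 0 = H 0 1) by (unfold psi; rewrite Rmult_0_l; field).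
  pose proof (hpsi 0 s ltac:(lra) ltac:(lra) ltac:(lra)). lra.
Qed.

Lemma g_pos t : 0 <= t < 1 -> 0 < H t 1.
Proof.
  intros Ht. set (s := sqrt t). assert (E: s*s = t) by (apply sqrt_sqrt; lra).
  assert (0 <= s) by apply sqrt_pos.
  assert (s < 1) by (unfold s; rewrite <- sqrt_1; apply sqrt_lt_1; lra).
  pose proof (psi_pos s ltac:(lra)). unfold psi in H2. rewrite E in H2.
  assert (0 < (1-s)*(1-s)) by nra.
  assert (H t 1 = H t 1 / ((1-s)*(1-s)) * ((1-s)*(1-s))) by (field; lra).
  rewrite H4. apply Rmult_lt_0_compat; auto.
Qed.

Lemma g_nonneg t : 0 <= t <= 1 -> 0 <= H t 1.
Proof. intros Ht. destruct (Req_dec t 1). subst; lra. left; apply g_pos; lra. Qed.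

Lemma H_diag x : 0 <= x -> H x x = 0.
Proof.
  intros Hx. destruct (Req_dec x 0). subst; auto.
  rewrite hhom by lra. replace (x/x) with 1 by (field; lra). rewrite h11; ring.
Qed.

Lemma H_pos_lt x y : 0 <= x -> x < y -> 0 < H x y.
Proof.
  intros Hx Hxy. rewrite hhom by lra. apply Rmult_lt_0_compat; [lra|]. apply g_pos.
  split. apply Rdiv_le_0_compat; lra. apply (Rmult_lt_reg_r y); [lra|]. field_simplify; lra.
Qed.

Lemma H_nonneg x y : 0 <= x -> 0 <= y -> 0 <= H x y.
Proof.
  intros Hx Hy. destruct (Rtotal_order x y) as [Hl|[He|Hg]].
  - left; apply H_pos_lt; auto.
  - subst. rewrite H_diag; lra.
  - rewrite hsym. left; apply H_pos_lt; auto.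
Qed.

Lemma D_repr x z : 0 <= x -> x < z ->
  sqrt (H x z) = (sqrt z - sqrt x) * sqrt (psi (sqrt x / sqrt z)).
Proof.
  intros Hx Hxz. assert (Hz : 0 < sqrt z) by (apply sqrt_lt_R0; lra).
  assert (Hxz' : sqrt x < sqrt z) by (apply sqrt_lt_1; lra).
  pose proof (sqrt_pos x).
  set (s := sqrt x / sqrt z).
  assert (Hs : 0 <= s < 1).
  { unfold s. split. apply Rdiv_le_0_compat; lra. apply (Rmult_lt_reg_r (sqrt z)); auto. field_simplify; lra. }
  assert (Ess : s * s = x / z).
  { unfold s. replace (sqrt x / sqrt z * (sqrt x / sqrt z)) with ((sqrt x * sqrt x)/(sqrt z * sqrt z)) by (field; lra).
    rewrite !sqrt_sqrt; lra. }
  rewrite hhom by lra. rewrite <- Ess.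
  assert (0 < (1-s)*(1-s)) by nra.
  replace (H (s*s) 1) with (psi s * ((1-s)*(1-s))) by (unfold psi; field; lra).
  assert (Ez : z * (psi s * ((1 - s) * (1 - s))) = ((sqrt z - sqrt x) * (sqrt z - sqrt x)) * psi s).
  { unfold s. replace z with (sqrt z * sqrt z) at 1 by (apply sqrt_sqrt; lra). field. lra. }
  rewrite Ez. rewrite sqrt_mult.
  - rewrite sqrt_square; lra.
  - apply Rle_0_sqr.
  - left; apply psi_pos; auto.
Qed.

Definition Dd x y := sqrt (H x y).

Lemma mid a b c : 0 <= a -> a <= b -> b <= c -> Dd a c <= Dd a b + Dd b c.
Proof.
  intros Ha Hab Hbc. unfold Dd.
  destruct (Req_dec a b). { subst. rewrite H_diag, sqrt_0; lra. }
  destruct (Req_dec b c). { subst. rewrite H_diag, sqrt_0 by lra. lra. }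
  rewrite !D_repr by lra.
  pose proof (sqrt_pos a).
  assert (Hab' : sqrt a < sqrt b) by (apply sqrt_lt_1; lra).
  assert (Hbc' : sqrt b < sqrt c) by (apply sqrt_lt_1; lra).
  set (A := sqrt a) in *. set (B := sqrt b) in *. set (C := sqrt c) in *.
  assert (psi (A/C) <= psi (A/B)).
  { apply hpsi. apply Rdiv_le_0_compat; lra.
    apply Rmult_le_compat_l; [lra|]. apply Rinv_le_contravar; lra.
    apply (Rmult_lt_reg_r B); [lra|]. field_simplify; lra. }
  assert (psi (A/C) <= psi (B/C)).
  { apply hpsi. apply Rdiv_le_0_compat; lra.
    apply Rmult_le_compat_r; [|lra]. left; apply Rinv_0_lt_compat; lra.
    apply (Rmult_lt_reg_r C); [lra|]. field_simplify; lra. }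
  apply sqrt_le_1_alt in H3. apply sqrt_le_1_alt in H4.
  replace (C - A) with ((B - A) + (C - B)) by ring. nra.
Qed.

Lemma mono1 a b c : 0 <= a -> a <= c -> c <= b -> Dd a c <= Dd a b.
Proof.
  intros Ha Hac Hcb. unfold Dd. apply sqrt_le_1_alt.
  destruct (Req_dec c 0). { subst. assert (a = 0) by lra. subst. rewrite h00. apply H_nonneg; lra. }
  rewrite (hhom a c), (hhom a b) by lra.
  assert (t : 0 <= a/b) by (apply Rdiv_le_0_compat; lra).
  assert (a/b <= a/c) by (apply Rmult_le_compat_l; [lra|]; apply Rinv_le_contravar; lra).
  assert (a/c <= 1) by (apply (Rmult_le_reg_r c); [lra|]; field_simplify; lra).
  pose proof (hg (a/b) (a/c) t H1 H2). pose proof (g_nonneg (a/b) ltac:(lra)).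
  nra.
Qed.

Lemma mono2 a b c : 0 <= b -> b <= a -> a <= c -> Dd a c <= Dd b c.
Proof.
  intros Hb Hba Hac. unfold Dd. apply sqrt_le_1_alt.
  destruct (Req_dec c 0). { subst. assert (a = 0) by lra. assert (b = 0) by lra. subst. lra. }
  rewrite (hhom a c), (hhom b c) by lra.
  assert (0 <= b/c) by (apply Rdiv_le_0_compat; lra).
  assert (b/c <= a/c) by (apply Rmult_le_compat_r; [left; apply Rinv_0_lt_compat; lra|lra]).
  assert (a/c <= 1) by (apply (Rmult_le_reg_r c); [lra|]; field_simplify; lra).
  pose proof (hg (b/c) (a/c) H1 H2 H3). nra.
Qed.

Lemma Dd_sym x y : Dd x y = Dd y x.
Proof. unfold Dd; rewrite hsym; auto. Qed.

Lemma abs_metric : is_metric_on_nonneg (fun r t => sqrt (H r t)).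
Proof.
  split; [|split].
  - intros x y Hx Hy. split.
    + intros E. destruct (Rtotal_order x y) as [Hl|[He|Hg']]; auto.
      * pose proof (H_pos_lt x y Hx Hl). pose proof (sqrt_lt_R0 _ H0). lra.
      * rewrite hsym in E. pose proof (H_pos_lt y x Hy Hg'). pose proof (sqrt_lt_R0 _ H0). lra.
    + intros ->. rewrite H_diag; auto. apply sqrt_0.
  - intros; rewrite hsym; auto.
  - intros x y z Hx Hy Hz. fold (Dd x z) (Dd x y) (Dd y z).
    pose proof (sqrt_pos (H x y)). pose proof (sqrt_pos (H y z)). fold (Dd x y) (Dd y z) in H0, H1.
    destruct (Rle_dec x y); destruct (Rle_dec y z); destruct (Rle_dec x z).
    + apply mid; lra.
    + lra.
    + pose proof (mono1 x y z ltac:(lra) ltac:(lra) ltac:(lra)). lra.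
    + rewrite (Dd_sym x z), (Dd_sym y z). pose proof (mono1 z y x ltac:(lra) ltac:(lra) ltac:(lra)). lra.
    + pose proof (mono2 x y z ltac:(lra) ltac:(lra) ltac:(lra)). lra.
    + rewrite (Dd_sym x z), (Dd_sym x y). pose proof (mono2 z y x ltac:(lra) ltac:(lra) ltac:(lra)). lra.
    + lra.
    + rewrite (Dd_sym x z), (Dd_sym x y), (Dd_sym y z). pose proof (mid z y x ltac:(lra) ltac:(lra) ltac:(lra)). lra.
Qed.
End Abs.

Lemma deriv_cont f x l : is_derive f x l -> continuity_pt f x.
Proof.
  intros H. apply continuity_pt_filterlim. apply (ex_derive_continuous f x). exists l; auto.
Qed.

Lemma mono_le f df a b : a <= b ->
  (forall x, a < x < b -> is_derive f x (df x)) ->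
  (forall x, a < x < b -> 0 <= df x) ->
  continuity_pt f a -> continuity_pt f b -> f a <= f b.
Proof.
  intros Hab Hd Hs Ca Cb. destruct (Req_dec a b) as [E|Ne]. subst; lra.
  set (df' := fun x => if Rlt_dec a x then if Rlt_dec x b then df x else 0 else 0).
  destruct (MVT_gen f a b df') as [c [Hc E]].
  - rewrite Rmin_left, Rmax_right by lra. intros x Hx. unfold df'.
    destruct (Rlt_dec a x); [|lra]. destruct (Rlt_dec x b); [|lra]. apply Hd; lra.
  - rewrite Rmin_left, Rmax_right by lra. intros x Hx.
    destruct (Req_dec x a). subst; auto. destruct (Req_dec x b). subst; auto.
    apply (deriv_cont f x (df x)). apply Hd; lra.
  - assert (0 <= df' c). { unfold df'. destruct (Rlt_dec a c); [|lra]. destruct (Rlt_dec c b); [|lra]. apply Hs; lra. }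
    nra.
Qed.

Lemma locally_pos s : 0 < s -> locally s (fun t => 0 < t).
Proof.
  intros Hs. exists (mkposreal s Hs). intros t Ht. simpl in Ht.
  unfold ball in Ht; simpl in Ht. unfold AbsRing_ball, abs, minus, plus, opp in Ht; simpl in Ht.
  apply Rabs_def2 in Ht. lra.
Qed.

Lemma psi_derive G s dG : is_derive G s dG -> s <> 1 ->
  is_derive (fun t => G t / ((1-t)*(1-t))) s ((dG*(1-s) + 2*G s)/((1-s)*(1-s)*(1-s))).
Proof.
  intros HG Hs.
  assert (Hg : is_derive (fun t => (1-t)*(1-t)) s (-(2*(1-s)))) by (auto_derive; auto; ring).
  pose proof (is_derive_div G (fun t => (1-t)*(1-t)) s dG _ HG Hg).
  assert (1 - s <> 0) by lra.
  replace ((dG*(1-s) + 2*G s)/((1-s)*(1-s)*(1-s))) with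
     ((dG * ((1-s)*(1-s)) - G s * (-(2*(1-s)))) / ((1-s)*(1-s))^2) by (field; auto).
  apply H. apply Rmult_integral_contrapositive; auto.
Qed.

Lemma ln_ineq y : 0 < y -> ln y <= y - 1.
Proof. intros. pose proof (exp_ineq1_le (ln y)). rewrite exp_ln in H0; lra. Qed.

Lemma is_derive_Ropp f x l : is_derive f x l -> is_derive (fun t => - f t) x (- l).
Proof. intros H. apply (is_derive_opp f x l) in H. exact H. Qed.

Lemma Hp_Gc p t : p <> 0 -> 1-p <> 0 -> 0 < t -> Hp p (t*t) 1 = Gc p t.
Proof.
  intros Hp0 Hq Ht. assert (0 < t*t) by nra.
  unfold Hp. destruct (Req_EM_T p 0); [lra|].
  rewrite powmean1, powmean_pos by lra. rewrite ln_1, Rmult_0_r, exp_0.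
  unfold Gc, M2f, Pf. reflexivity.
Qed.

Definition Spsi p s := (dGc p s*(1-s) + 2*Gc p s)/((1-s)*(1-s)*(1-s)).
Definition psiH p s := Hp p (s*s) 1 / ((1-s)*(1-s)).
Definition GH p s := Hp p (s*s) 1.

Lemma psiH_derive p s : p <> 0 -> 1-p <> 0 -> 0 < s < 1 -> is_derive (psiH p) s (Spsi p s).
Proof.
  intros Hp0 Hq Hs. apply (is_derive_ext_loc (fun t => Gc p t / ((1-t)*(1-t)))).
  - eapply filter_imp; [|apply (locally_pos s); lra]. intros t Ht. unfold psiH. rewrite Hp_Gc; auto.
  - apply psi_derive; [apply Gc_derive; auto; lra | lra].
Qed.

Lemma GH_derive p s : p <> 0 -> 1-p <> 0 -> 0 < s -> is_derive (GH p) s (dGc p s).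
Proof.
  intros Hp0 Hq Hs. apply (is_derive_ext_loc (Gc p)).
  - eapply filter_imp; [|apply (locally_pos s); lra]. intros t Ht. unfold GH. rewrite Hp_Gc; auto.
  - apply Gc_derive; auto.
Qed.

Definition Tdiff p s := exp (Lf (ln s) 1) - exp (Lf (ln s) (2*(1-p)-1) + ((1-(1-p))/(1-p)) * Lf (ln s) (2*(1-p))).

Lemma Tdiff_ge p s : 0 <= Tq (ln s) (1-p) -> 0 <= Tdiff p s.
Proof. intros H. unfold Tdiff, Tq in *. assert (X := exp_le_exp (Lf (ln s) (2*(1-p)-1) + ((1-(1-p))/(1-p)) * Lf (ln s) (2*(1-p))) (Lf (ln s) 1) ltac:(lra)). lra. Qed.
Lemma Tdiff_le p s : Tq (ln s) (1-p) <= 0 -> Tdiff p s <= 0.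
Proof. intros H. unfold Tdiff, Tq in *. assert (X := exp_le_exp (Lf (ln s) 1) (Lf (ln s) (2*(1-p)-1) + ((1-(1-p))/(1-p)) * Lf (ln s) (2*(1-p))) ltac:(lra)). lra. Qed.
Lemma Tdiff_lt p s : Tq (ln s) (1-p) < 0 -> Tdiff p s < 0.
Proof. intros H. unfold Tdiff, Tq in *. assert (X := exp_increasing (Lf (ln s) 1) (Lf (ln s) (2*(1-p)-1) + ((1-(1-p))/(1-p)) * Lf (ln s) (2*(1-p))) ltac:(lra)). lra. Qed.

Lemma Spsi_eq p s : p <> 0 -> 1-p <> 0 -> 0 < s < 1 ->
  Spsi p s = (2/p * (2 * Tdiff p s)) / ((1-s)*(1-s)*(1-s)).
Proof. intros. unfold Spsi, Tdiff. rewrite Phi_eq; auto; lra. Qed.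

Lemma lns_neg s : 0 < s < 1 -> ln s < 0.
Proof. intros. rewrite <- ln_1. apply ln_increasing; lra. Qed.

Lemma cube_pos s : s < 1 -> 0 < (1-s)*(1-s)*(1-s).
Proof. intros. assert (0 < 1-s) by lra. repeat apply Rmult_lt_0_compat; lra. Qed.

Lemma inv2p_pos p : 0 < p -> 0 < 2/p.
Proof. intros. apply Rdiv_lt_0_compat; lra. Qed.
Lemma inv2p_neg p : p < 0 -> 2/p < 0.
Proof. intros. unfold Rdiv. assert (/p < 0) by (apply Rinv_lt_0_compat; auto). nra. Qed.

Lemma Spsi_nonneg p s : (0 < p <= 1/2 \/ p < 0 \/ 1 < p) -> 0 < s < 1 -> 0 <= Spsi p s.
Proof.
  intros Hp0 Hs. rewrite Spsi_eq by lra. pose proof (cube_pos s ltac:(lra)). pose proof (lns_neg s Hs).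
  apply Rdiv_le_0_compat; auto.
  destruct Hp0 as [Hp0|[Hp0|Hp0]].
  - pose proof (Tdiff_ge p s (Tq_a (ln s) (1-p) H0 ltac:(lra))). pose proof (inv2p_pos p ltac:(lra)). nra.
  - pose proof (Tdiff_le p s (Tq_b (ln s) (1-p) H0 ltac:(lra))). pose proof (inv2p_neg p ltac:(lra)). nra.
  - pose proof (Tdiff_ge p s (Tq_c (ln s) (1-p) H0 ltac:(lra))). pose proof (inv2p_pos p ltac:(lra)). nra.
Qed.

Lemma Spsi_neg p s : 1/2 < p < 1 -> 0 < s < 1 -> Spsi p s < 0.
Proof.
  intros Hp0 Hs. rewrite Spsi_eq by lra. pose proof (cube_pos s ltac:(lra)). pose proof (lns_neg s Hs).
  pose proof (Tdiff_lt p s (Tq_d (ln s) (1-p) H0 ltac:(lra))). pose proof (inv2p_pos p ltac:(lra)).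
  apply Rdiv_neg_pos; auto. nra.
Qed.

Lemma rpow0 q : rpow 0 q = 0.
Proof. unfold rpow. destruct (Req_EM_T 0 0); [auto|lra]. Qed.
Lemma rpow_nonneg x q : 0 <= rpow x q.
Proof. unfold rpow. destruct (Req_EM_T x 0). lra. left; apply exp_pos. Qed.
Lemma rpow1 q : rpow 1 q = 1.
Proof. rewrite rpow_pos by lra. rewrite ln_1, Rmult_0_r, exp_0; auto. Qed.

Lemma powmean1_gen x : 0 <= x -> powmean 1 x 1 = (x+1)/2.
Proof.
  intros Hx. destruct (Req_dec x 0). 2: apply powmean1; lra.
  subst. unfold powmean. destruct (Req_EM_T 1 0); [lra|]. destruct (Rlt_dec 1 0); [lra|].
  rewrite rpow0, rpow1. rewrite rpow_pos by lra. rewrite Rinv_1, Rmult_1_l, exp_ln; lra.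
Qed.

Lemma powmean_qpos x q : 0 < q -> 0 <= x -> powmean q x 1 = exp (/q * ln ((rpow x q + 1)/2)).
Proof.
  intros Hq Hx. unfold powmean. destruct (Req_EM_T q 0); [lra|]. destruct (Rlt_dec q 0); [lra|].
  rewrite rpow1. pose proof (rpow_nonneg x q). rewrite rpow_pos by lra. reflexivity.
Qed.

Lemma GH_qpos p s : 0 < 1-p -> p <> 0 -> GH p s = 2/p * ((s*s+1)/2 - exp (/(1-p) * ln ((rpow (s*s) (1-p) + 1)/2))).
Proof.
  intros Hq Hp0. unfold GH, Hp. destruct (Req_EM_T p 0); [lra|].
  assert (0 <= s*s) by nra. rewrite powmean1_gen, powmean_qpos; auto.
Qed.

Lemma rpow_cont0 q : 0 < q -> continuity_pt (fun s => rpow (s*s) q) 0.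
Proof.
  intros Hq. unfold continuity_pt, continue_in, limit1_in, limit_in. simpl.
  intros eps Heps. exists (exp (ln eps / (2*q))). split. apply exp_pos.
  intros s [_ Hs]. unfold R_dist in *. rewrite Rmult_0_l, rpow0, Rminus_0_r.
  rewrite Rminus_0_r in Hs.
  destruct (Req_dec s 0). { subst. rewrite Rmult_0_l, rpow0, Rabs_R0; auto. }
  assert (0 < s*s) by nra. rewrite rpow_pos by auto. rewrite Rabs_pos_eq by (left; apply exp_pos).
  assert (ln (s*s) < 2 * (ln eps / (2*q))).
  { replace (s*s) with (Rabs s * Rabs s) by (rewrite <- Rabs_mult; apply Rabs_pos_eq; nra).
    rewrite ln_mult by (apply Rabs_pos_lt; auto).
    assert (ln (Rabs s) < ln eps / (2*q)).
    { rewrite <- (ln_exp (ln eps / (2*q))). apply ln_increasing; auto. apply Rabs_pos_lt; auto. }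
    lra. }
  rewrite <- (exp_ln eps) by auto. apply exp_increasing.
  replace (ln eps) with (q * (2 * (ln eps / (2*q)))) by (field; lra).
  apply Rmult_lt_compat_l; auto.
Qed.

Lemma GH_cont0_qpos p : 0 < 1-p -> p <> 0 -> continuity_pt (GH p) 0.
Proof.
  intros Hq Hp0.
  set (W := fun u => exp (/(1-p) * ln ((u + 1)/2))).
  assert (CW : continuity_pt W (rpow (0*0) (1-p))).
  { rewrite Rmult_0_l, rpow0. apply (deriv_cont W 0 (/(1-p) * ((1/2)/((0+1)/2)) * W 0)). unfold W.
    auto_derive. lra. unfold Rdiv. field. lra. }
  assert (CR := rpow_cont0 (1-p) Hq).
  assert (C1 := continuity_pt_comp _ _ 0 CR CW).
  assert (C2 : continuity_pt (fun s => 2/p * ((s*s+1)/2 - W (rpow (s*s) (1-p)))) 0).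
  { apply continuity_pt_mult. apply continuity_pt_const. intros ? ?; auto.
    apply continuity_pt_minus; [|exact C1].
    apply (deriv_cont _ 0 0). auto_derive; auto. field. }
  eapply continuity_pt_ext; [|apply C2]. intros s. simpl. rewrite GH_qpos; auto.
Qed.

Lemma psi_mono_pos p s1 s2 : (0 < p <= 1/2 \/ p < 0 \/ 1 < p) -> 0 < s1 -> s1 <= s2 -> s2 < 1 -> psiH p s1 <= psiH p s2.
Proof.
  intros Hp0 H1 H12 H2. assert (p <> 0) by lra. assert (1-p <> 0) by lra.
  apply (mono_le (psiH p) (Spsi p)); auto.
  - intros x Hx. apply psiH_derive; auto; lra.
  - intros x Hx. apply Spsi_nonneg; auto; lra.
  - apply (deriv_cont _ _ (Spsi p s1)). apply psiH_derive; auto; lra.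
  - apply (deriv_cont _ _ (Spsi p s2)). apply psiH_derive; auto; lra.
Qed.

Lemma G_mono_pos p s1 s2 : p <> 0 -> 1-p <> 0 -> 0 < s1 -> s1 <= s2 -> s2 <= 1 -> GH p s2 <= GH p s1.
Proof.
  intros Hp0 Hq H1 H12 H2.
  assert (- GH p s1 <= - GH p s2); [|lra].
  apply (mono_le (fun s => - GH p s) (fun s => - dGc p s)); auto.
  - intros x Hx. apply is_derive_Ropp. apply GH_derive; auto; lra.
  - intros x Hx. pose proof (dG_nonpos p x Hp0 Hq ltac:(lra)). lra.
  - apply (deriv_cont _ _ (- dGc p s1)). apply is_derive_Ropp. apply GH_derive; auto; lra.
  - apply (deriv_cont _ _ (- dGc p s2)). apply is_derive_Ropp. apply GH_derive; auto; lra.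
Qed.

Lemma psi_cont0_qpos p : 0 < 1-p -> p <> 0 -> continuity_pt (psiH p) 0.
Proof.
  intros Hq Hp0. unfold psiH. apply continuity_pt_div.
  - apply (GH_cont0_qpos p Hq Hp0).
  - apply (deriv_cont _ _ (-(2*(1-0)))). auto_derive; auto. ring.
  - lra.
Qed.

Lemma psi_mono_qpos p s1 s2 : (0 < p <= 1/2 \/ p < 0) -> 0 <= s1 -> s1 <= s2 -> s2 < 1 -> psiH p s1 <= psiH p s2.
Proof.
  intros Hp0 H1 H12 H2. destruct (Req_dec s1 s2). subst; lra.
  destruct (Req_dec s1 0). 2: apply psi_mono_pos; auto; lra.
  subst. assert (p <> 0) by lra. assert (1-p <> 0) by lra.
  apply (mono_le (psiH p) (Spsi p)); auto.
  - intros x Hx. apply psiH_derive; auto; lra.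
  - intros x Hx. apply Spsi_nonneg; auto; lra.
  - apply psi_cont0_qpos; lra.
  - apply (deriv_cont _ _ (Spsi p s2)). apply psiH_derive; auto; lra.
Qed.

Lemma G_mono_qpos p s1 s2 : 0 < 1-p -> p <> 0 -> 0 <= s1 -> s1 <= s2 -> s2 <= 1 -> GH p s2 <= GH p s1.
Proof.
  intros Hq Hp0 H1 H12 H2. destruct (Req_dec s1 s2). subst; lra.
  destruct (Req_dec s1 0). 2: apply G_mono_pos; auto; lra.
  subst.
  assert (- GH p 0 <= - GH p s2); [|lra].
  apply (mono_le (fun s => - GH p s) (fun s => - dGc p s)); auto.
  - intros x Hx. apply is_derive_Ropp. apply GH_derive; auto; lra.
  - intros x Hx. pose proof (dG_nonpos p x Hp0 ltac:(lra) ltac:(lra)). lra.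
  - apply continuity_pt_opp. apply GH_cont0_qpos; auto.
  - apply (deriv_cont _ _ (- dGc p s2)). apply is_derive_Ropp. apply GH_derive; auto; lra.
Qed.

Lemma hg_of_s (H : R -> R -> R) :
  (forall s1 s2, 0 <= s1 -> s1 <= s2 -> s2 <= 1 -> H (s2*s2) 1 <= H (s1*s1) 1) ->
  forall t1 t2, 0 <= t1 -> t1 <= t2 -> t2 <= 1 -> H t2 1 <= H t1 1.
Proof.
  intros Hs t1 t2 H1 H12 H2.
  rewrite <- (sqrt_sqrt t1), <- (sqrt_sqrt t2) by lra. apply Hs.
  apply sqrt_pos. apply sqrt_le_1_alt; auto. rewrite <- sqrt_1. apply sqrt_le_1_alt; auto.
Qed.

Lemma powmean00 q : powmean q 0 0 = 0.
Proof.
  unfold powmean. destruct (Req_EM_T q 0). rewrite Rmult_0_l; apply sqrt_0.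
  destruct (Rlt_dec q 0). destruct (Req_EM_T 0 0); [auto|lra].
  rewrite rpow0. replace ((0+0)/2) with 0 by field. apply rpow0.
Qed.

Lemma powmean11 q : powmean q 1 1 = 1.
Proof.
  destruct (Req_dec q 0). subst. unfold powmean. destruct (Req_EM_T 0 0); [|lra]. rewrite Rmult_1_l; apply sqrt_1.
  rewrite powmean_pos by lra. rewrite ln_1, Rmult_0_r, exp_0. replace ((1+1)/2) with 1 by field.
  rewrite ln_1, Rmult_0_r, exp_0; auto.
Qed.

Lemma Hp00 p : Hp p 0 0 = 0.
Proof.
  unfold Hp. destruct (Req_EM_T p 0). unfold xlnx. destruct (Req_EM_T 0 0); [|lra].
  destruct (Req_EM_T (0+0) 0); [ring|lra].
  rewrite !powmean00. ring.
Qed.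

Lemma Hp11 p : Hp p 1 1 = 0.
Proof.
  unfold Hp. destruct (Req_EM_T p 0). unfold xlnx. destruct (Req_EM_T 1 0); [lra|].
  destruct (Req_EM_T (1+1) 0); [lra|]. replace ((1+1)/2) with 1 by field. rewrite ln_1. ring.
  rewrite !powmean11. ring.
Qed.

Lemma powmean1_01 : powmean 1 0 1 = 1/2.
Proof. rewrite powmean1_gen by lra. field. Qed.

Lemma Hp01_qpos p : (0 < p <= 1/2 \/ p < 0) -> 0 < Hp p 0 1.
Proof.
  intros Hp0. unfold Hp. destruct (Req_EM_T p 0); [lra|].
  rewrite powmean1_01, powmean_qpos by lra. rewrite rpow0. replace ((0+1)/2) with (1/2) by field.
  assert (Hl : ln (1/2) < 0) by (rewrite <- ln_1; apply ln_increasing; lra).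
  assert (E : exp (ln (1/2)) = 1/2) by (apply exp_ln; lra).
  destruct Hp0 as [Hp0|Hp0].
  - assert (1 < /(1-p)). { apply (Rmult_lt_reg_l (1-p)); [lra|]. rewrite Rinv_r by lra. lra. }
    assert (exp (/(1-p) * ln (1/2)) < 1/2) by (rewrite <- E at 2; apply exp_increasing; nra).
    pose proof (inv2p_pos p ltac:(lra)). nra.
  - assert (0 < /(1-p) < 1). { split. apply Rinv_0_lt_compat; lra. apply (Rmult_lt_reg_l (1-p)); [lra|]. rewrite Rinv_r by lra. lra. }
    assert (1/2 < exp (/(1-p) * ln (1/2))) by (rewrite <- E at 1; apply exp_increasing; nra).
    pose proof (inv2p_neg p ltac:(lra)). nra.
Qed.

Lemma Hp01_big p : 1 < p -> Hp p 0 1 = 1/p.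
Proof.
  intros Hp0. unfold Hp. destruct (Req_EM_T p 0); [lra|].
  rewrite powmean1_01. unfold powmean at 1. destruct (Req_EM_T (1-p) 0); [lra|].
  destruct (Rlt_dec (1-p) 0); [|lra]. destruct (Req_EM_T 0 0); [|lra]. field. lra.
Qed.

Lemma N1 p s : 1 < p -> 0 < s < 1 -> psiH p 0 <= psiH p s.
Proof.
  intros Hp0 Hs. unfold psiH. rewrite Rmult_0_l, Hp01_big by auto.
  rewrite Hp_Gc by (auto; lra). unfold Gc.
  set (q := 1-p). assert (q < 0) by (unfold q; lra).
  assert (M2f q s <= s).
  { unfold M2f, Pf. apply (Rle_trans _ (exp (ln s))); [|rewrite exp_ln; lra]. apply exp_le_exp.
    set (Y := exp (q * ln s)). assert (0 < Y) by apply exp_pos.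
    assert (EY : exp (q * ln (s*s)) = Y*Y) by (unfold Y; rewrite <- exp_plus, ln_mult by lra; f_equal; ring).
    rewrite EY.
    assert (LY : ln Y <= ln ((Y*Y+1)/2)) by (apply ln_le; [lra| pose proof (pow2_ge_0 (Y-1)); nra]).
    unfold Y in LY at 1. rewrite ln_exp in LY. fold Y in LY.
    assert (/q < 0) by (apply Rinv_lt_0_compat; auto).
    replace (ln s) with (/q * (q * ln s)) by (field; lra). nra. }
  assert (0 < (1-s)*(1-s)) by nra.
  replace (1 - 0) with 1 by ring. rewrite Rmult_1_l, Rdiv_1_r.
  apply (Rmult_le_reg_r ((1-s)*(1-s))); auto.
  fold q. replace (2 / p * ((s * s + 1) / 2 - M2f q s) / ((1 - s) * (1 - s)) * ((1 - s) * (1 - s)))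
    with (2 / p * ((s * s + 1) / 2 - M2f q s)) by (field; lra).
  apply (Rmult_le_reg_l p); [lra|].
  replace (p * (1/p * ((1-s)*(1-s)))) with ((1-s)*(1-s)) by (field; lra).
  replace (p * (2 / p * ((s * s + 1) / 2 - M2f q s))) with (s*s+1 - 2 * M2f q s) by (field; lra).
  nra.
Qed.

Lemma N2 p s : 1 < p -> 0 < s <= 1 -> GH p s <= GH p 0.
Proof.
  intros Hp0 Hs. unfold GH. rewrite Rmult_0_l, Hp01_big by auto.
  rewrite Hp_Gc by (auto; lra). unfold Gc.
  set (q := 1-p). assert (q < 0) by (unfold q; lra).
  assert (s*s <= M2f q s).
  { unfold M2f, Pf. apply (Rle_trans _ (exp (ln (s*s)))); [rewrite exp_ln; nra|]. apply exp_le_exp.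
    assert (ln (s*s) <= 0) by (rewrite <- ln_1; apply ln_le; nra).
    set (X := exp (q * ln (s*s))). assert (1 <= X) by (apply exp_ge1; nra).
    assert (LX : ln ((X+1)/2) <= ln X) by (apply ln_le; lra).
    unfold X in LX at 2. rewrite ln_exp in LX. fold X in LX.
    assert (/q < 0) by (apply Rinv_lt_0_compat; auto).
    replace (ln (s*s)) with (/q * (q * ln (s*s))) at 1 by (field; lra). nra. }
  apply (Rmult_le_reg_l p); [lra|].
  replace (p * (1/p)) with 1 by (field; lra).
  replace (p * (2 / p * ((s * s + 1) / 2 - M2f q s))) with (s*s+1 - 2 * M2f q s) by (field; lra).
  nra.
Qed.

Definition G0c s := s*s*ln(s*s) - (s*s+1)*ln((s*s+1)/2).
Definition dG0 s := 2*s*(ln (s*s) - ln ((s*s+1)/2)).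

Lemma xlnx1 : xlnx 1 = 0.
Proof. unfold xlnx. destruct (Req_EM_T 1 0); [lra|]. rewrite ln_1; ring. Qed.

Lemma GH0_all s : GH 0 s = xlnx (s*s) - (s*s+1)*ln((s*s+1)/2).
Proof.
  unfold GH, Hp. destruct (Req_EM_T 0 0); [|lra]. rewrite xlnx1.
  destruct (Req_EM_T (s*s+1) 0). { assert (0 <= s*s) by nra. lra. } ring.
Qed.

Lemma GH0_eq s : 0 < s -> GH 0 s = G0c s.
Proof. intros. rewrite GH0_all, xlnx_pos by nra. reflexivity. Qed.

Lemma G0c_derive s : 0 < s -> is_derive G0c s (dG0 s).
Proof.
  intros Hs. unfold G0c, dG0. assert (0 < s*s) by nra.
  auto_derive. repeat split; lra. unfold Rdiv. field. repeat split; lra.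
Qed.

Lemma GH0_derive s : 0 < s -> is_derive (GH 0) s (dG0 s).
Proof.
  intros Hs. apply (is_derive_ext_loc G0c).
  - eapply filter_imp; [|apply (locally_pos s); lra]. intros t Ht. rewrite GH0_eq; auto.
  - apply G0c_derive; auto.
Qed.

Definition Spsi0 s := (dG0 s*(1-s) + 2*G0c s)/((1-s)*(1-s)*(1-s)).

Lemma psiH0_derive s : 0 < s < 1 -> is_derive (psiH 0) s (Spsi0 s).
Proof.
  intros Hs. apply (is_derive_ext_loc (fun t => G0c t / ((1-t)*(1-t)))).
  - eapply filter_imp; [|apply (locally_pos s); lra]. intros t Ht. unfold psiH. fold (GH 0 t). rewrite GH0_eq; auto.
  - apply psi_derive; [apply G0c_derive; lra | lra].
Qed.

Lemma Spsi0_nonneg s : 0 < s < 1 -> 0 <= Spsi0 s.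
Proof.
  intros Hs. pose proof (T0 (ln s) (lns_neg s Hs)). rewrite exp_ln in H by lra.
  unfold Lf in H. replace (2 * ln s) with (ln (s*s)) in H by (rewrite ln_mult; lra).
  rewrite exp_ln in H by nra.
  unfold Spsi0. apply Rdiv_le_0_compat; [|apply cube_pos; lra].
  unfold dG0, G0c. rewrite ln_mult by lra. rewrite ln_mult in H by lra.
  replace ((1 + s*s)/2) with ((s*s+1)/2) in H by lra. nra.
Qed.

Lemma dG0_nonpos s : 0 < s < 1 -> dG0 s <= 0.
Proof.
  intros Hs. unfold dG0. assert (ln (s*s) <= ln ((s*s+1)/2)) by (apply ln_le; nra). nra.
Qed.

Lemma xlnx_ss_bound s : Rabs s < 1 -> Rabs (xlnx (s*s)) <= 2 * Rabs s.
Proof.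
  intros Hs. destruct (Req_dec s 0). { subst. rewrite Rmult_0_l. unfold xlnx. destruct (Req_EM_T 0 0); [|lra]. rewrite !Rabs_R0. lra. }
  assert (Ha : 0 < Rabs s) by (apply Rabs_pos_lt; auto).
  assert (E : s*s = Rabs s * Rabs s) by (rewrite <- Rabs_mult; symmetry; apply Rabs_pos_eq; nra).
  rewrite xlnx_pos by nra. rewrite E. rewrite ln_mult by lra.
  set (a := Rabs s) in *.
  assert (ln a < 0) by (rewrite <- ln_1; apply ln_increasing; lra).
  assert (ln (/a) <= /a - 1) by (apply ln_ineq; apply Rinv_0_lt_compat; lra).
  rewrite ln_Rinv in H1 by lra.
  assert (a * ln a >= a - 1). { apply Rle_ge. apply (Rmult_le_reg_r (/a)). apply Rinv_0_lt_compat; lra.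
     replace (a * ln a * /a) with (ln a) by (field; lra). replace ((a-1) * /a) with (1 - /a) by (field; lra). lra. }
  rewrite Rabs_left1 by nra. nra.
Qed.

Lemma xlnx_cont0 : continuity_pt (fun s => xlnx (s*s)) 0.
Proof.
  unfold continuity_pt, continue_in, limit1_in, limit_in. simpl.
  intros eps Heps. exists (Rmin 1 (eps/2)). split. apply Rmin_pos; lra.
  intros s [_ Hs]. unfold R_dist in *. rewrite Rminus_0_r in Hs.
  rewrite Rmult_0_l. unfold xlnx at 2. destruct (Req_EM_T 0 0); [|lra]. rewrite Rminus_0_r.
  assert (Rabs s < 1) by (apply (Rlt_le_trans _ _ _ Hs); apply Rmin_l).
  assert (Rabs s < eps/2) by (apply (Rlt_le_trans _ _ _ Hs); apply Rmin_r).
  pose proof (xlnx_ss_bound s H). lra.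
Qed.

Lemma GH0_cont0 : continuity_pt (GH 0) 0.
Proof.
  eapply continuity_pt_ext. { intros s. symmetry. apply GH0_all. }
  apply continuity_pt_minus. apply xlnx_cont0.
  apply (deriv_cont _ _ ((0*1+1*0) * ln ((0*0+1)/2) + (0*0+1) * ((0*1+1*0)/2 / ((0*0+1)/2)))).
  auto_derive. lra. unfold Rdiv. field.
Qed.

Lemma psi0_mono s1 s2 : 0 <= s1 -> s1 <= s2 -> s2 < 1 -> psiH 0 s1 <= psiH 0 s2.
Proof.
  intros H1 H12 H2. destruct (Req_dec s1 s2). subst; lra.
  apply (mono_le (psiH 0) Spsi0); auto.
  - intros x Hx. apply psiH0_derive; lra.
  - intros x Hx. apply Spsi0_nonneg; lra.
  - destruct (Req_dec s1 0).
    + subst. unfold psiH. apply continuity_pt_div. apply GH0_cont0.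
      apply (deriv_cont _ _ (-(2*(1-0)))). auto_derive; auto. ring. lra.
    + apply (deriv_cont _ _ (Spsi0 s1)). apply psiH0_derive; lra.
  - apply (deriv_cont _ _ (Spsi0 s2)). apply psiH0_derive; lra.
Qed.

Lemma G0_mono s1 s2 : 0 <= s1 -> s1 <= s2 -> s2 <= 1 -> GH 0 s2 <= GH 0 s1.
Proof.
  intros H1 H12 H2. destruct (Req_dec s1 s2). subst; lra.
  assert (- GH 0 s1 <= - GH 0 s2); [|lra].
  apply (mono_le (fun s => - GH 0 s) (fun s => - dG0 s)); auto.
  - intros x Hx. apply is_derive_Ropp. apply GH0_derive; lra.
  - intros x Hx. pose proof (dG0_nonpos x ltac:(lra)). lra.
  - destruct (Req_dec s1 0).
    + subst. apply continuity_pt_opp. apply GH0_cont0.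
    + apply (deriv_cont _ _ (- dG0 s1)). apply is_derive_Ropp. apply GH0_derive; lra.
  - apply (deriv_cont _ _ (- dG0 s2)). apply is_derive_Ropp. apply GH0_derive; lra.
Qed.

Lemma Hp01_zero : 0 < Hp 0 0 1.
Proof.
  pose proof (GH0_all 0). unfold GH in H. rewrite Rmult_0_l in H. rewrite H.
  unfold xlnx. destruct (Req_EM_T 0 0); [|lra].
  assert (ln ((0+1)/2) < ln 1) by (apply ln_increasing; lra). rewrite ln_1 in H0. lra.
Qed.

Lemma Hp1_ss s : 0 <= s -> Hp 1 (s*s) 1 = (1-s)*(1-s).
Proof.
  intros Hs. unfold Hp. destruct (Req_EM_T 1 0); [lra|].
  rewrite powmean1_gen by nra. replace (1-1) with 0 by ring. unfold powmean.
  destruct (Req_EM_T 0 0); [|lra]. rewrite Rmult_1_r, sqrt_square by auto. field.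
Qed.

Lemma metric_part p : p <= 1/2 \/ 1 <= p -> is_metric_on_nonneg (fun r t => sqrt (Hp p r t)).
Proof.
  intros Hp0. apply abs_metric.
  - apply Hp_sym.
  - apply Hp_hom.
  - apply Hp00.
  - apply Hp11.
  - destruct (Req_dec p 0). subst; apply Hp01_zero.
    destruct (Req_dec p 1). subst. pose proof (Hp1_ss 0 ltac:(lra)). rewrite Rmult_0_l in H0. rewrite H0. lra.
    destruct (Rlt_dec 1 p). rewrite Hp01_big by auto. apply Rdiv_lt_0_compat; lra.
    apply Hp01_qpos; lra.
  - intros s1 s2 H1 H12 H2. fold (psiH p s1) (psiH p s2).
    destruct (Req_dec p 0). subst; apply psi0_mono; auto.
    destruct (Req_dec p 1). { subst. unfold psiH. rewrite !Hp1_ss by lra.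
      assert (0 < (1-s1)*(1-s1)) by nra. assert (0 < (1-s2)*(1-s2)) by nra.
      replace ((1-s1)*(1-s1)/((1-s1)*(1-s1))) with 1 by (field; lra).
      replace ((1-s2)*(1-s2)/((1-s2)*(1-s2))) with 1 by (field; lra). lra. }
    destruct (Rlt_dec 1 p).
    + destruct (Req_dec s1 s2). subst; lra.
      destruct (Req_dec s1 0). subst; apply N1; lra.
      apply psi_mono_pos; lra.
    + apply psi_mono_qpos; lra.
  - apply hg_of_s. intros s1 s2 H1 H12 H2. fold (GH p s1) (GH p s2).
    destruct (Req_dec p 0). subst; apply G0_mono; auto.
    destruct (Req_dec p 1). { subst. unfold GH. rewrite !Hp1_ss by lra. nra. }
    destruct (Rlt_dec 1 p).
    + destruct (Req_dec s1 s2). subst; lra.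
      destruct (Req_dec s1 0). subst; apply N2; lra.
      apply G_mono_pos; lra.
    + apply G_mono_qpos; lra.
Qed.

Lemma nonmetric_part p : 1/2 < p < 1 -> ~ triangle_on_nonneg (fun r t => sqrt (Hp p r t)).
Proof.
  intros Hp0 T. assert (p <> 0) by lra. assert (1-p <> 0) by lra.
  specialize (T (1/16) (1/4) 1 ltac:(lra) ltac:(lra) ltac:(lra)). simpl in T.
  assert (Dec : psiH p (1/2) < psiH p (1/4)).
  { assert (- psiH p (1/4) < - psiH p (1/2)); [|lra].
    apply (incr_function (fun s => - psiH p s) 0 1 (fun s => - Spsi p s)).
    - intros x H1 H2. simpl in H1, H2. apply is_derive_Ropp. apply psiH_derive; auto.
    - intros x H1 H2. simpl in H1, H2. pose proof (Spsi_neg p x Hp0 ltac:(lra)). lra.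
    - simpl; lra.
    - lra.
    - simpl; lra. }
  assert (G2 : 0 <= GH p (1/2)).
  { pose proof (G_mono_pos p (1/2) 1 H H0 ltac:(lra) ltac:(lra) ltac:(lra)).
    unfold GH in H1 at 1. rewrite Rmult_1_l, Hp11 in H1. auto. }
  assert (E1 : Hp p (1/16) 1 = psiH p (1/4) * (9/16)).
  { unfold psiH. replace (1/16) with (1/4*(1/4)) by field. generalize (Hp p (1/4*(1/4)) 1); intro h. field. }
  assert (E2 : Hp p (1/4) 1 = psiH p (1/2) * (1/4)).
  { unfold psiH. replace (1/4) with (1/2*(1/2)) at 1 by field. generalize (Hp p (1/2*(1/2)) 1); intro h. field. }
  assert (E3 : Hp p (1/16) (1/4) = psiH p (1/2) * (1/16)).
  { rewrite Hp_hom by lra. replace (1/16/(1/4)) with (1/4) by field. rewrite E2. field. }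
  rewrite E1, E2, E3 in T.
  assert (P2 : 0 <= psiH p (1/2)).
  { unfold psiH. unfold GH in G2. replace (1/2*(1/2)) with (1/4) in * by field. apply Rdiv_le_0_compat; lra. }
  rewrite !sqrt_mult in T by lra.
  replace (sqrt (9/16)) with (3/4) in T by (replace (9/16) with (3/4*(3/4)) by field; rewrite sqrt_square; lra).
  replace (sqrt (1/16)) with (1/4) in T by (replace (1/16) with (1/4*(1/4)) by field; rewrite sqrt_square; lra).
  replace (sqrt (1/4)) with (1/2) in T by (replace (1/4) with (1/2*(1/2)) by field; rewrite sqrt_square; lra).
  assert (sqrt (psiH p (1/2)) < sqrt (psiH p (1/4))) by (apply sqrt_lt_1; lra).
  lra.
Qed.

Theorem mainTheorem1 :
  (forall p : R, (p <= 1/2 \/ 1 <= p) ->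
     is_metric_on_nonneg (fun r t => sqrt (Hp p r t))) /\
  (forall p : R, 1/2 < p < 1 ->
     ~ triangle_on_nonneg (fun r t => sqrt (Hp p r t))).
Proof. split. apply metric_part. apply nonmetric_part. Qed.
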